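(* Let $A$ be a synaptic algebra and $p,q\in P$. Let $r:=(p\vee q)\wedge(p\vee q^{\perp})\wedge(p^{\perp}\vee q)\wedge(p^{\perp}\vee q^{\perp})$, $r_p:=p\wedge(p^{\perp}\vee q)\wedge(p^{\perp}\vee q^{\perp})$, $r_{p^{\perp}}:=p^{\perp}\wedge(p\vee q)\wedge(p\vee q^{\perp})$, $r_q:=q\wedge(p\vee q^{\perp})\wedge(p^{\perp}\vee q^{\perp})$, $r_{q^{\perp}}:=q^{\perp}\wedge(p\vee q)\wedge(p^{\perp}\vee q)$, $c:=(pqp+p^{\perp}q^{\perp}p^{\perp})^{1/2}$, $s:=(pq^{\perp}p+p^{\perp}qp^{\perp})^{1/2}$, and $c_r:=(r_pr_qr_p+r_{p^{\perp}}r_{q^{\perp}}r_{p^{\perp}})^{1/2}$, $s_r:=(r_pr_{q^{\perp}}r_p+r_{p^{\perp}}r_qr_{p^{\perp}})^{1/2}$. Then: (i) $c_r=cr=rc$ and $s_r=sr=rs$; (ii) $c=c_r+|(p\wedge q)-(p^{\perp}\wedge q^{\perp})|$ and $s=s_r+|(p\wedge q^{\perp})-(p^{\perp}\wedge q)|$.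
   Context: Synaptic algebra (Foulis): $R$ is a real linear associative algebra with unit $1$, and $A\subseteq R$ is a real linear subspace with $1\in A$. For $a,b\in A$ write $aCb$ iff $ab=ba$; $C(a):=\{b\in A: aCb\}$; $CC(a):=\{b\in A: bCd \text{ for all } d\in C(a)\}$. $A$ is a synaptic algebra with enveloping algebra $R$ iff: (SA1) $A$ is a partially ordered archimedean real linear space with positive cone $A^+$, $1$ is an order unit, $\|\cdot\|$ the order-unit norm; (SA2) $a\in A\Rightarrow a^2\in A^+$; (SA3) $a,b\in A^+\Rightarrow aba\in A^+$; (SA4) if $a\in A$, $b\in A^+$, $aba=0$ then $ab=ba=0$; (SA5) if $a\in A^+$ there is $b\in A^+\cap CC(a)$ with $b^2=a$; (SA6) for $a\in A$ there is $p=p^2\in A$ with $ab=0\Leftrightarrow pb=0$ for all $b\in A$; (SA7) if $1\le a$ there is $b\in A$ with $ab=ba=1$; (SA8) if $a,b\in A$, $a_1\le a_2\le\cdots$ are pairwise commuting elements of $C(b)$ with $\|a-a_n\|\to0$, then $a\in C(b)$. $A$ is nondegenerate. Products are computed in $R$. $P:=\{p\in A:p=p^2\}$ with the inherited order is an orthomodular lattice with $p^{\perp}:=1-p$, meet $\wedge$, join $\vee$. For $0\le a$, $a^{1/2}$ is its unique positive square root in $A$; $|a|:=(a^2)^{1/2}$. *)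

(* Defs.v *)
From HB Require Import structures.
From mathcomp Require Import all_boot all_order all_algebra.
From mathcomp Require Import boolp classical_sets reals.
From Stdlib Require Import ClassicalEpsilon.
Set Implicit Arguments. Unset Strict Implicit. Unset Printing Implicit Defensive.
Import Order.TTheory GRing.Theory Num.Theory.
Local Open Scope ring_scope.

Section Synaptic.
Variables (R : realType) (V : algType R).
(* V is the enveloping algebra (a unital associative real algebra; the
   carrier is a nontrivial ring, 1 <> 0). A : V -> Prop is the subspace,
   pos : V -> Prop is the positive cone A^+. *)
Variables (A pos : V -> Prop).

Definition sle (a b : V) : Prop := pos (b - a).

Definition commutes (a b : V) : Prop := a * b = b * a.

Definition Ccom (a : V) : V -> Prop := fun b => A b /\ commutes a b.
Definition CCcom (a : V) : V -> Prop :=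
  fun b => A b /\ forall d, Ccom a d -> commutes b d.

Definition ounorm (a : V) : R :=
  inf [set e : R | 0 <= e /\ sle (- (e *: 1)) a /\ sle a (e *: 1)].

Definition synaptic : Prop :=
  [/\ A 0, A 1, (forall a b, A a -> A b -> A (a + b)),
      (forall (k : R) a, A a -> A (k *: a)) &
  ((forall a, pos a -> A a) /\ 
   [/\ (forall a b, pos a -> pos b -> pos (a + b)),
      (forall (k : R) a, 0 <= k -> pos a -> pos (k *: a)),
      (forall a, pos a -> pos (- a) -> a = 0),
      (forall a b, A a -> A b -> (forall n : nat, sle (a *+ n) b) -> sle a 0) &
      (forall a, A a -> exists n : nat, sle a (1 *+ n))]) /\
  [/\ (forall a, A a -> pos (a * a)),
      (forall a b, pos a -> pos b -> pos (a * b * a)),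
      (forall a b, A a -> pos b -> a * b * a = 0 -> a * b = 0 /\ b * a = 0),
      (forall a, pos a -> exists b, [/\ pos b, CCcom a b & b * b = a]) &
      (forall a, A a -> exists p, [/\ A p, p * p = p &
                   forall b, A b -> (a * b = 0 <-> p * b = 0)])] /\
  [/\ (forall a, A a -> sle 1 a -> exists b, A b /\ a * b = 1 /\ b * a = 1),
      (forall a b (an : nat -> V), A a -> A b ->
                   (forall n, Ccom b (an n)) ->
                   (forall m n, commutes (an m) (an n)) ->
                   (forall n, sle (an n) (an n.+1)) ->
                   (forall e : R, 0 < e -> exists N, forall n, (N <= n)%N ->
                       ounorm (a - an n) < e) ->
                   Ccom b a) &
      ~ ((1 : V) = 0)]].

Definition proj (p : V) : Prop := A p /\ p * p = p.

Definition pperp (p : V) : V := 1 - p.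

Definition is_pmeet (p q m : V) : Prop :=
  [/\ proj m, sle m p, sle m q &
      forall x, proj x -> sle x p -> sle x q -> sle x m].
Definition is_pjoin (p q j : V) : Prop :=
  [/\ proj j, sle p j, sle q j &
      forall x, proj x -> sle p x -> sle q x -> sle j x].

(* meet and join in the lattice P (chosen by Hilbert's epsilon; they exist
   and are unique because P is a lattice) *)
Definition pmeet (p q : V) : V := epsilon (inhabits 0) (is_pmeet p q).
Definition pjoin (p q : V) : V := epsilon (inhabits 0) (is_pjoin p q).

Definition psqrt (a : V) : V := epsilon (inhabits 0) (fun b => pos b /\ b * b = a).
Definition sabs (a : V) : V := psqrt (a * a).

End Synaptic.

(* Main.v *)
Require Import Defs.
From HB Require Import structures.
From mathcomp Require Import all_boot all_order all_algebra.
From mathcomp Require Import boolp classical_sets reals.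
From Stdlib Require Import ClassicalEpsilon.
Set Implicit Arguments. Unset Strict Implicit. Unset Printing Implicit Defensive.
Import Order.TTheory GRing.Theory Num.Theory.
Local Open Scope ring_scope.

Lemma comm_sq (V : ringType) (a b : V) : a * b = b * a -> a * b * (a * b) = a * a * (b * b).
Proof. by move=> E; rewrite -mulrA (mulrA b) -E -!mulrA. Qed.
Lemma L3 (V : ringType) (a b r : V) : a * r = r * a -> b * r = r * b -> r * r = r ->
   a * r * (b * r) * (a * r) = a * b * a * r.
Proof.
move=> Ea Eb Er.
have -> : a * r * (b * r) = a * b * r by rewrite -mulrA (mulrA r) -Eb -mulrA Er mulrA.
by rewrite -mulrA (mulrA r) -Ea -(mulrA a r r) Er !mulrA.
Qed.
Lemma o1 (V : ringType) (a x y : V) : x * a = x -> a * y = 0 -> x * y = 0.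
Proof. by move=> E1 E2; rewrite -E1 -mulrA E2 mulr0. Qed.
Lemma o2 (V : ringType) (a x y : V) : x * a = 0 -> a * y = y -> x * y = 0.
Proof. by move=> E1 E2; rewrite -E2 mulrA E1 mul0r. Qed.
Lemma cKl0 (V : ringType) (a k : V) : a * k = 0 -> (1 - a) * k = k.
Proof. by move=> E; rewrite mulrBl mul1r E subr0. Qed.
Lemma cKl1 (V : ringType) (a k : V) : a * k = k -> (1 - a) * k = 0.
Proof. by move=> E; rewrite mulrBl mul1r E subrr. Qed.
Lemma cKr0 (V : ringType) (a k : V) : k * a = 0 -> k * (1 - a) = k.
Proof. by move=> E; rewrite mulrBr mulr1 E subr0. Qed.
Lemma cKr1 (V : ringType) (a k : V) : k * a = k -> k * (1 - a) = 0.
Proof. by move=> E; rewrite mulrBr mulr1 E subrr. Qed.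
Lemma Z5 (W : zmodType) (o a b c d : W) : (o - a - b - c - d) + (d + a) + (b + c) = o.
Proof.
by rewrite (addrA _ d a) subrK (addrAC _ (-c) a) (addrAC _ (-b) a) subrK -(addrA o) -opprD subrK.
Qed.

Lemma Zp (W : zmodType) (o a b c d : W) : o - c - d - (a + b) = o - a - b - c - d.
Proof.
rewrite opprD addrA (addrAC _ (-d) (-a)) (addrAC _ (-c) (-a)) (addrAC _ (-d) (-b)) (addrAC _ (-c) (-b)).
done.
Qed.
Lemma Zq (W : zmodType) (o a b c d : W) : o - a - b - c - d = o - b - a - d - c.
Proof. by rewrite (addrAC o) (addrAC (o - b - a)). Qed.

Section S.
Variables (R : realType) (V : algType R) (A pos : V -> Prop).
Hypothesis HA : synaptic A pos.

Lemma addrKC (W : zmodType) (x y : W) : x + y - x = y.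
Proof. by rewrite addrC addKr. Qed.

Lemma E3 (W : zmodType) (o a b : W) : (o - a) - (o - b) = b - a.
Proof. by rewrite opprB addrC addrA subrK. Qed.

Lemma A0 : A 0. Proof. by case: HA. Qed.
Lemma A1 : A 1. Proof. by case: HA. Qed.
Lemma AD a b : A a -> A b -> A (a + b). Proof. by case: HA => _ _ H _ _; apply: H. Qed.
Lemma AZ (k : R) a : A a -> A (k *: a). Proof. by case: HA => _ _ _ H _; apply: H. Qed.
Lemma posA a : pos a -> A a. Proof. by case: HA => _ _ _ _ [[H _] _]; apply: H. Qed.
Lemma posD a b : pos a -> pos b -> pos (a + b).
Proof. by case: HA => _ _ _ _ [[_ [H _ _ _ _]] _]; apply: H. Qed.
Lemma posZ (k : R) a : 0 <= k -> pos a -> pos (k *: a).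
Proof. by case: HA => _ _ _ _ [[_ [_ H _ _ _]] _]; apply: H. Qed.
Lemma posanti a : pos a -> pos (- a) -> a = 0.
Proof. by case: HA => _ _ _ _ [[_ [_ _ H _ _]] _]; apply: H. Qed.
Lemma SA2 a : A a -> pos (a * a).
Proof. by case: HA => _ _ _ _ [_ [[H _ _ _ _] _]]; apply: H. Qed.
Lemma SA3 a b : pos a -> pos b -> pos (a * b * a).
Proof. by case: HA => _ _ _ _ [_ [[_ H _ _ _] _]]; apply: H. Qed.
Lemma SA4 a b : A a -> pos b -> a * b * a = 0 -> a * b = 0 /\ b * a = 0.
Proof. by case: HA => _ _ _ _ [_ [[_ _ H _ _] _]]; apply: H. Qed.
Lemma SA5 a : pos a -> exists b, [/\ pos b, CCcom A a b & b * b = a].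
Proof. by case: HA => _ _ _ _ [_ [[_ _ _ H _] _]]; apply: H. Qed.
Lemma SA6 a : A a -> exists p, [/\ A p, p * p = p &
                   forall b, A b -> (a * b = 0 <-> p * b = 0)].
Proof. by case: HA => _ _ _ _ [_ [[_ _ _ _ H] _]]; apply: H. Qed.

Lemma AN a : A a -> A (- a).
Proof. by move=> Ha; rewrite -scaleN1r; apply: AZ. Qed.
Lemma AB a b : A a -> A b -> A (a - b).
Proof. by move=> Ha Hb; apply: AD => //; apply: AN. Qed.
Lemma Asq a : A a -> A (a * a).
Proof. by move=> Ha; apply/posA/SA2. Qed.
Lemma Ajord a b : A a -> A b -> A (a * b + b * a).
Proof.
move=> Ha Hb.
have E : (a + b) * (a + b) = a * a + (a * b + b * a) + b * b.
  by rewrite mulrDl !mulrDr !addrA.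
have -> : a * b + b * a = (a + b) * (a + b) - b * b - a * a.
  by rewrite E addrK addrKC.

by apply: AB; [apply: AB|]; apply: Asq => //; apply: AD.
Qed.
Lemma Ahalf x : A (x + x) -> A x.
Proof.
move=> H.
have -> : x = (2^-1 : R) *: (x + x).
  by rewrite -mulr2n -scaler_nat scalerA mulVf ?scale1r // pnatr_eq0.
by apply: AZ.
Qed.
Lemma Acomm a b : A a -> A b -> a * b = b * a -> A (a * b).
Proof. by move=> Ha Hb E; apply: Ahalf; rewrite {2}E; apply: Ajord. Qed.
Lemma Atriple a b : A a -> A b -> A (a * b * a).
Proof.
move=> Ha Hb; apply: Ahalf.
have -> : a * b * a + a * b * a =
   (a * (a * b + b * a) + (a * b + b * a) * a) - ((a * a) * b + b * (a * a)).
  rewrite mulrDr mulrDl !mulrA.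
  by rewrite opprD !addrA (addrAC _ (- (a * a * b))) addrK -[a * a * b + a * b * a + a * b * a]addrA addrKC.
apply: AB; last by apply: Ajord => //; apply: Asq.
by apply: Ajord => //; apply: Ajord.
Qed.

Lemma pos1 : pos 1.
Proof. by rewrite -[1](mulr1 (1 : V)); apply/SA2/A1. Qed.
Lemma pos0 : pos 0.
Proof. by rewrite -(scale0r (1 : V)); apply: posZ => //; apply: pos1. Qed.
Lemma projpos e : proj A e -> pos e.
Proof. by case=> He E; rewrite -E; apply: SA2. Qed.
Lemma sum0 x y : pos x -> pos y -> x + y = 0 -> x = 0.
Proof.
move=> Px Py E; apply: posanti => //.
by have -> : - x = y by apply/eqP; rewrite eq_sym -subr_eq0 opprK addrC E.
Qed.
Lemma sq0 y : A y -> y * y = 0 -> y = 0.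
Proof.
move=> Hy E; have [H _] : y * 1 = 0 /\ 1 * y = 0.
  by apply: SA4 => //; [apply: pos1 | rewrite mulr1].
by rewrite -(mulr1 y).
Qed.

Lemma projC f : proj A f -> proj A (1 - f).
Proof.
case=> Hf E; split; first by apply: AB => //; apply: A1.
by rewrite mulrBl mul1r mulrBr mulr1 E subrr subr0.
Qed.
Lemma projCl f : proj A f -> (1 - f) * f = 0.
Proof. by case=> _ E; rewrite mulrBl mul1r E subrr. Qed.
Lemma projCr f : proj A f -> f * (1 - f) = 0.
Proof. by case=> _ E; rewrite mulrBr mulr1 E subrr. Qed.

Lemma leproj e f : proj A e -> proj A f -> sle pos e f -> f * e = e /\ e * f = e.
Proof.
move=> He Hf Hle; have Hg := projC Hf.
have E1 : (1 - f) * (f - e) * (1 - f) = - ((1 - f) * e * (1 - f)).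
  by rewrite [(1 - f) * (f - e)]mulrBr (projCl Hf) sub0r mulNr.
have P1 : pos ((1 - f) * e * (1 - f)) by apply: SA3; apply: projpos.
have P2 : pos (- ((1 - f) * e * (1 - f))) by rewrite -E1; apply: SA3 => //; apply: projpos.
have [H1 H2] := SA4 (proj1 Hg) (projpos He) (posanti P1 P2).
move: H1 H2; rewrite mulrBl mulrBr mul1r mulr1 => /eqP H1 /eqP H2.
by split; apply/eqP; rewrite eq_sym -subr_eq0.
Qed.

Lemma projle e f : proj A e -> proj A f -> f * e = e -> e * f = e -> sle pos e f.
Proof.
case=> He Ee [Hf Ef] E1 E2; rewrite /sle.
have -> : f - e = (f - e) * (f - e).
  by rewrite mulrBl !mulrBr Ef Ee E1 E2 subrr subr0.
by apply: SA2; apply: AB.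
Qed.

Lemma prodpos a b : pos a -> pos b -> a * b = b * a -> pos (a * b).
Proof.
move=> Pa Pb E; have [d [Pd [_ Hd] Ed]] := SA5 Pa.
have Cb : d * b = b * d by apply: Hd; split => //; apply: posA.
by rewrite -Ed -mulrA Cb mulrA; apply: SA3.
Qed.

Lemma sqrt_aux b d : pos b -> pos d -> b * b = d * d -> b * d = d * b -> b = d.
Proof.
move=> Pb Pd Ebd Cbd; set x := b - d.
have Ax : A x by apply: AB; apply: posA.
have Cxb : x * b = b * x by rewrite /x mulrBl mulrBr Cbd.
have Cxd : x * d = d * x by rewrite /x mulrBl mulrBr Cbd.
have P1 : pos (x * b * x).
  rewrite Cxb -mulrA; apply: prodpos => //; first by apply: SA2.
  by rewrite mulrA -Cxb -!mulrA Cxb.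
have P2 : pos (x * d * x).
  rewrite Cxd -mulrA; apply: prodpos => //; first by apply: SA2.
  by rewrite mulrA -Cxd -!mulrA Cxd.
have S0 : x * b * x + x * d * x = 0.
  rewrite -mulrDl -mulrDr /x mulrBl !mulrDr Ebd Cbd.
  by rewrite [d * d + d * b]addrC subrr !mul0r addr0.
have Z1 := sum0 P1 P2 S0.
have Z2 : x * d * x = 0 by move: S0; rewrite Z1 add0r.
have [H1 _] := SA4 Ax (Pb) Z1.
have [H2 _] := SA4 Ax (Pd) Z2.
apply/eqP; rewrite -subr_eq0; apply/eqP; apply: sq0 => //.
by move: H1 H2; rewrite /x => H1 H2; rewrite mulrBr H1 H2 subrr.
Qed.

Lemma sqrt_uniq b c : pos b -> pos c -> b * b = c * c -> b = c.
Proof.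
move=> Pb Pc E.
have [d [Pd [_ Hd] Ed]] := SA5 (SA2 (posA Pb)).
have H : forall y, pos y -> y * y = b * b -> y = d.
  move=> y Py Ey; apply: (sqrt_aux Py Pd); first by rewrite Ey Ed.
  apply/esym; apply: Hd; split; first by apply: posA.
  by rewrite /commutes -Ey mulrA.
have -> := H b Pb erefl.
by rewrite (H c Pc (esym E)).
Qed.

Lemma psqrt_spec a : pos a -> pos (psqrt pos a) /\ psqrt pos a * psqrt pos a = a.
Proof.
move=> Pa; rewrite /psqrt.
apply: (@epsilon_spec V (inhabits 0) (fun b => pos b /\ b * b = a)).
by have [d [Pd _ Ed]] := SA5 Pa; exists d.
Qed.

Lemma psqrt_eq a y : pos a -> pos y -> y * y = a -> psqrt pos a = y.
Proof.
move=> Pa Py E; have [P1 E1] := psqrt_spec Pa.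
by apply: sqrt_uniq => //; rewrite E1 E.
Qed.

Lemma psqrt_comm a z : pos a -> A z -> a * z = z * a ->
  psqrt pos a * z = z * psqrt pos a.
Proof.
move=> Pa Az E; have [d [Pd [_ Hd] Ed]] := SA5 Pa.
rewrite (psqrt_eq Pa Pd Ed); by apply: Hd.
Qed.

Lemma join_exists p q : proj A p -> proj A q -> exists j, is_pjoin A pos p q j.
Proof.
move=> Hp Hq.
have [e [Ae Ee He]] := SA6 (AD (proj1 Hp) (proj1 Hq)).
have He' : proj A e by [].
have Hg := projC He'.
have Z : (p + q) * (1 - e) = 0 by apply/He; [apply: (proj1 Hg) | apply: projCr].
have Z2 : (1 - e) * p * (1 - e) + (1 - e) * q * (1 - e) = 0.
  by rewrite -mulrDl -mulrDr -mulrA Z mulr0.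
have P1 : pos ((1 - e) * p * (1 - e)) by apply: SA3; apply: projpos.
have P2 : pos ((1 - e) * q * (1 - e)) by apply: SA3; apply: projpos.
have Z1 := sum0 P1 P2 Z2.
have Z3 : (1 - e) * q * (1 - e) = 0 by move: Z2; rewrite Z1 add0r.
have [Ap _] := Hp; have [Aq _] := Hq.
have [H1 H2] := SA4 (proj1 Hg) (projpos Hp) Z1.
have [H3 H4] := SA4 (proj1 Hg) (projpos Hq) Z3.
have L : forall x, (1 - e) * x = 0 -> x * (1 - e) = 0 -> e * x = x /\ x * e = x.
  move=> x; rewrite mulrBl mulrBr mul1r mulr1 => /eqP F1 /eqP F2.
  by split; apply/eqP; rewrite eq_sym -subr_eq0.
exists e; split => //.
- by have [F1 F2] := L p H1 H2; apply: projle.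
- by have [F1 F2] := L q H3 H4; apply: projle.
move=> x Hx Hpx Hqx.
have [F1 F2] := leproj Hp Hx Hpx.
have [F3 F4] := leproj Hq Hx Hqx.
have Z4 : (p + q) * (1 - x) = 0.
  by rewrite mulrDl !mulrBr !mulr1 F2 F4 !subrr addr0.
have Z5 : e * (1 - x) = 0 by apply/He => //; apply: (proj1 (projC Hx)).
have [Z6 _] : (1 - x) * e = 0 /\ e * (1 - x) = 0.
  by apply: SA4; [apply: (proj1 (projC Hx)) | apply: projpos | rewrite -mulrA Z5 mulr0].
move: Z5 Z6; rewrite mulrBl mulrBr mul1r mulr1 => /eqP Z5 /eqP Z6.
by apply: projle => //; apply/eqP; rewrite eq_sym -subr_eq0.
Qed.

Lemma join_spec p q : proj A p -> proj A q -> is_pjoin A pos p q (pjoin A pos p q).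
Proof.
move=> Hp Hq; rewrite /pjoin.
by apply: (@epsilon_spec V (inhabits 0) (is_pjoin A pos p q)); apply: join_exists.
Qed.

Lemma meet_uniq p q m1 m2 : is_pmeet A pos p q m1 -> is_pmeet A pos p q m2 -> m1 = m2.
Proof.
case=> H1 a1 b1 c1 [H2 a2 b2 c2].
have L1 := c2 m1 H1 a1 b1; have L2 := c1 m2 H2 a2 b2.
move: L1 L2; rewrite /sle => L1 L2.
apply/eqP; rewrite eq_sym -subr_eq0; apply/eqP; apply: posanti => //.
by rewrite opprB.
Qed.

Lemma pmeet_eq p q m : is_pmeet A pos p q m -> pmeet A pos p q = m.
Proof.
move=> H; apply: (meet_uniq _ H); rewrite /pmeet.
by apply: (@epsilon_spec V (inhabits 0) (is_pmeet A pos p q)); exists m.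
Qed.

Lemma pmeet_join p q : proj A p -> proj A q ->
  pmeet A pos p q = 1 - pjoin A pos (1 - p) (1 - q).
Proof.
move=> Hp Hq; apply: pmeet_eq.
have [J1 J2 J3 J4] := join_spec (projC Hp) (projC Hq).
have E : forall a b : V, a - (1 - b) = b - (1 - a).
  by move=> a b; rewrite !opprB addrCA.
split; first by apply: projC.
- by rewrite /sle E.
- by rewrite /sle E.
move=> x Hx Lp Lq; rewrite /sle addrAC.
by apply: J4; [apply: projC | rewrite /sle E3 | rewrite /sle E3].
Qed.

Lemma pmeet_comm x y : proj A x -> proj A y -> x * y = y * x -> pmeet A pos x y = x * y.
Proof.
move=> Hx Hy C; have [Ax Ex] := Hx; have [Ay Ey] := Hy.
have Hxy : proj A (x * y).
  split; first by apply: Acomm.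
  by rewrite -mulrA (mulrA y) -C -mulrA Ey mulrA Ex.
apply: pmeet_eq; split => //.
- by apply: projle => //; [rewrite mulrA Ex | rewrite -mulrA -C mulrA Ex].
- by apply: projle => //; [rewrite C mulrA Ey | rewrite -mulrA Ey].
move=> z Hz Lx Ly.
have [F1 F2] := leproj Hz Hx Lx; have [F3 F4] := leproj Hz Hy Ly.
by apply: projle => //; [rewrite -mulrA F3 | rewrite mulrA F2].
Qed.

Lemma core p q K1 K2 K3 K4 r :
  proj A p -> proj A q -> proj A K1 -> proj A K2 -> proj A K3 -> proj A K4 ->
  p * K1 = 0 -> K1 * p = 0 -> q * K1 = 0 -> K1 * q = 0 ->
  p * K2 = 0 -> K2 * p = 0 -> q * K2 = K2 -> K2 * q = K2 ->
  p * K3 = K3 -> K3 * p = K3 -> q * K3 = 0 -> K3 * q = 0 ->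
  p * K4 = K4 -> K4 * p = K4 -> q * K4 = K4 -> K4 * q = K4 ->
  r = 1 - K1 - K2 - K3 - K4 ->
  let X := p * q * p + (1 - p) * (1 - q) * (1 - p) in
  [/\ psqrt pos (p * r * (q * r) * (p * r) + (1 - p) * r * ((1 - q) * r) * ((1 - p) * r))
        = psqrt pos X * r,
      psqrt pos X * r = r * psqrt pos X &
      psqrt pos X = psqrt pos X * r + sabs pos (K4 - K1)].
Proof.
move=> Hp Hq H1 H2 H3 H4 p1 e1p q1 e1q p2 e2p q2 e2q p3 e3p q3 e3q p4 e4p q4 e4q Er X.
have [Ap Ep] := Hp; have [Aq Eq] := Hq.
have [A1' E11] := H1; have [A2' E22] := H2; have [A3' E33] := H3; have [A4' E44] := H4.
have E12 : K1 * K2 = 0 by apply: (o2 e1q q2).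
have E21 : K2 * K1 = 0 by apply: (o1 e2q q1).
have E13 : K1 * K3 = 0 by apply: (o2 e1p p3).
have E31 : K3 * K1 = 0 by apply: (o1 e3p p1).
have E14 : K1 * K4 = 0 by apply: (o2 e1p p4).
have E41 : K4 * K1 = 0 by apply: (o1 e4p p1).
have E23 : K2 * K3 = 0 by apply: (o2 e2p p3).
have E32 : K3 * K2 = 0 by apply: (o1 e3p p2).
have E24 : K2 * K4 = 0 by apply: (o2 e2p p4).
have E42 : K4 * K2 = 0 by apply: (o1 e4p p2).
have E34 : K3 * K4 = 0 by apply: (o2 e3q q4).
have E43 : K4 * K3 = 0 by apply: (o1 e4q q3).
have rK1 : r * K1 = 0 by rewrite Er !mulrBl mul1r E11 E21 E31 E41 !subr0 subrr.
have rK2 : r * K2 = 0 by rewrite Er !mulrBl mul1r E12 E22 E32 E42 !subr0 subrr.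
have rK3 : r * K3 = 0 by rewrite Er !mulrBl mul1r E13 E23 E33 E43 !subr0 subrr.
have rK4 : r * K4 = 0 by rewrite Er !mulrBl mul1r E14 E24 E34 E44 !subr0 subrr.
have Err : r * r = r by rewrite {2}Er !mulrBr mulr1 rK1 rK2 rK3 rK4 !subr0.
have Ar : A r.
  by rewrite Er; do 4 apply: AB => //; apply: A1.
have Hr : proj A r by [].
have Cpr : p * r = r * p.
  by rewrite Er !mulrBr !mulrBl mulr1 mul1r p1 p2 p3 p4 e1p e2p e3p e4p.
have Cqr : q * r = r * q.
  by rewrite Er !mulrBr !mulrBl mulr1 mul1r q1 q2 q3 q4 e1q e2q e3q e4q.
have Cpr' : (1 - p) * r = r * (1 - p) by rewrite mulrBl mulrBr mul1r mulr1 Cpr.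
have Cqr' : (1 - q) * r = r * (1 - q) by rewrite mulrBl mulrBr mul1r mulr1 Cqr.
have AX : A X by apply: AD; apply: Atriple => //; apply: (proj1 (projC _)).
have PX : pos X.
  by apply: posD; apply: SA3; apply: projpos => //; apply: projC.
have XK1 : X * K1 = K1.
  by rewrite /X mulrDl -!mulrA p1 !mulr0 add0r (cKl0 p1) (cKl0 q1) (cKl0 p1).
have K1X : K1 * X = K1.
  by rewrite /X mulrDr !mulrA e1p !mul0r add0r (cKr0 e1p) (cKr0 e1q) (cKr0 e1p).
have XK2 : X * K2 = 0.
  by rewrite /X mulrDl -!mulrA p2 !mulr0 add0r (cKl0 p2) (cKl1 q2) !mulr0.
have K2X : K2 * X = 0.
  by rewrite /X mulrDr !mulrA e2p !mul0r add0r (cKr0 e2p) (cKr1 e2q) !mul0r.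
have XK3 : X * K3 = 0.
  by rewrite /X mulrDl -!mulrA p3 q3 !mulr0 add0r (cKl1 p3) !mulr0.
have K3X : K3 * X = 0.
  by rewrite /X mulrDr !mulrA e3p e3q !mul0r add0r (cKr1 e3p) !mul0r.
have XK4 : X * K4 = K4.
  by rewrite /X mulrDl -!mulrA p4 q4 p4 (cKl1 p4) !mulr0 addr0.
have K4X : K4 * X = K4.
  by rewrite /X mulrDr !mulrA e4p e4q e4p (cKr1 e4p) !mul0r addr0.
have CXr : X * r = r * X.
  by rewrite Er !mulrBr !mulrBl mulr1 mul1r XK1 XK2 XK3 XK4 K1X K2X K3X K4X.
have [Pc Ec] := psqrt_spec PX.
set c := psqrt pos X in Pc Ec *.
have Cr : c * r = r * c by apply: psqrt_comm.
have Pcr : pos (c * r) by apply: prodpos => //; apply: projpos.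
split => //.
  rewrite (L3 Cpr Cqr Err) (L3 Cpr' Cqr' Err) -mulrDl -/X.
  have <- : c * r * (c * r) = X * r by rewrite comm_sq // Ec Err.
  by apply: psqrt_eq => //; apply: SA2; apply: posA.
set K := K4 + K1.
have EK : K * K = K by rewrite /K mulrDl !mulrDr E44 E41 E14 E11 addr0 add0r.
have HK : proj A K by split => //; apply: AD.
have -> : sabs pos (K4 - K1) = K.
  rewrite /sabs.
  have -> : (K4 - K1) * (K4 - K1) = K.
    by rewrite mulrBl !mulrBr E44 E41 E14 E11 subr0 sub0r opprK.
  by apply: psqrt_eq => //; apply: projpos.
have XK : X * K = K by rewrite /K mulrDr XK4 XK1.
have KX : K * X = K by rewrite /K mulrDl K4X K1X.
have CK : c * K = K * c by apply: psqrt_comm => //; [apply: (proj1 HK) | rewrite XK KX].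
have cK : c * K = K.
  have E1 : psqrt pos K = c * K.
    apply: psqrt_eq; first by apply: projpos.
      by apply: prodpos => //; apply: projpos.
    by rewrite comm_sq // Ec EK XK.
  by rewrite -E1; apply: psqrt_eq => //; apply: projpos.
set L := K2 + K3.
have AL : A L by apply: AD.
have XL : X * L = 0 by rewrite /L mulrDr XK2 XK3 addr0.
have LX : L * X = 0 by rewrite /L mulrDl K2X K3X addr0.
have CL : c * L = L * c by apply: psqrt_comm => //; rewrite XL LX.
have cL : c * L = 0.
  apply: sq0; first by apply: Acomm => //; apply: posA.
  by rewrite comm_sq // Ec mulrA XL mul0r.
have E1 : r + K + L = 1 by rewrite Er /K /L Z5.
by rewrite -{1}(mulr1 c) -E1 (mulrDr c (r + K) L) (mulrDr c r K) cK cL addr0.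
Qed.

Lemma sub1K (y : V) : 1 - (1 - y) = y.
Proof. exact: subKr. Qed.

Lemma projM x y : proj A x -> proj A y -> x * y = y * x -> proj A (x * y).
Proof.
move=> [Ax Ex] [Ay Ey] C; split; first by apply: Acomm.
by rewrite -mulrA (mulrA y) -C -mulrA Ey mulrA Ex.
Qed.

Lemma commC (x y : V) : x * y = y * x -> x * (1 - y) = (1 - y) * x.
Proof. by move=> C; rewrite mulrBr mulrBl mulr1 mul1r C. Qed.

Lemma twomeet x K K' : proj A x -> proj A K -> proj A K' ->
  x * K = K * x -> x * K' = K' * x -> K * K' = 0 -> K' * K = 0 ->
  pmeet A pos (pmeet A pos x (1 - K)) (1 - K') = x * (1 - K - K').
Proof.
move=> Hx HK HK' C1 C2 O1 O2.
rewrite (pmeet_comm Hx (projC HK) (commC C1)).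
have C3 : (1 - K) * (1 - K') = (1 - K') * (1 - K).
  by apply: commC; rewrite mulrBl mul1r O1 mulrBr mulr1 O2.
have C4 : x * (1 - K) * (1 - K') = (1 - K') * (x * (1 - K)).
  by rewrite -mulrA C3 !mulrA (commC C2).
rewrite (pmeet_comm (projM Hx (projC HK) (commC C1)) (projC HK') C4).
  by rewrite -mulrA mulrBl mul1r (mulrBr K 1 K') mulr1 O1 subr0 addrAC.
Qed.

Lemma orthP K L : proj A K -> proj A L -> K * L = 0 -> L * K = 0 -> proj A (K + L).
Proof.
move=> [AK EK] [AL EL] O1 O2; split; first by apply: AD.
by rewrite mulrDl !mulrDr EK EL O1 O2 addr0 add0r.
Qed.

Lemma meetC S K : proj A S -> proj A K -> S * K = 0 -> K * S = 0 ->
  pmeet A pos (1 - S) (1 - K) = 1 - (S + K).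
Proof.
move=> HS HK O1 O2.
have C : (1 - S) * (1 - K) = (1 - K) * (1 - S).
  by apply: commC; rewrite mulrBl mul1r O1 mulrBr mulr1 O2.
rewrite (pmeet_comm (projC HS) (projC HK) C).
by rewrite mulrBl mul1r mulrBr mulr1 O1 subr0 opprD addrA addrAC.
Qed.

Lemma join_K a b J : proj A a -> proj A b -> is_pjoin A pos a b J ->
  [/\ proj A (1 - J), a * (1 - J) = 0, (1 - J) * a = 0,
      b * (1 - J) = 0 & (1 - J) * b = 0].
Proof.
move=> Ha Hb [HJ La Lb _].
have [F1 F2] := leproj Ha HJ La; have [F3 F4] := leproj Hb HJ Lb.
split.
- by apply: projC.
- by apply: cKr1.
- by apply: cKl1.
- by apply: cKr1.
- by apply: cKl1.
Qed.

Lemma fromCl (a k : V) : (1 - a) * k = 0 -> a * k = k.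
Proof. by rewrite mulrBl mul1r => /eqP; rewrite subr_eq0 => /eqP. Qed.
Lemma fromCr (a k : V) : k * (1 - a) = 0 -> k * a = k.
Proof. by rewrite mulrBr mulr1 => /eqP; rewrite subr_eq0 => /eqP. Qed.

Lemma main_thm (p q : V) (hp : proj A p) (hq : proj A q) :
  let meet := pmeet A pos in
  let join := pjoin A pos in
  let pp := pperp p in
  let qp := pperp q in
  let r := meet (meet (meet (join p q) (join p qp)) (join pp q)) (join pp qp) in
  let r_p := meet (meet p (join pp q)) (join pp qp) in
  let r_pp := meet (meet pp (join p q)) (join p qp) in
  let r_q := meet (meet q (join p qp)) (join pp qp) in
  let r_qp := meet (meet qp (join p q)) (join pp q) in
  let c := psqrt pos (p * q * p + pp * qp * pp) in
  let s := psqrt pos (p * qp * p + pp * q * pp) in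
  let c_r := psqrt pos (r_p * r_q * r_p + r_pp * r_qp * r_pp) in
  let s_r := psqrt pos (r_p * r_qp * r_p + r_pp * r_q * r_pp) in
  [/\ c_r = c * r, c * r = r * c, s_r = s * r & s * r = r * s] /\
  (c = c_r + sabs pos (meet p q - meet pp qp) /\
   s = s_r + sabs pos (meet p qp - meet pp q)).
Proof.
cbv zeta; rewrite /pperp.
have Hp' := projC hp; have Hq' := projC hq.
rewrite (pmeet_join hp hq) (pmeet_join Hp' Hq') (pmeet_join hp Hq') (pmeet_join Hp' hq) !sub1K.
move: (pjoin A pos p q) (join_spec hp hq) => J1 HJ1.
have [PK1 p1 e1p q1 e1q] := join_K hp hq HJ1.
have eJ1 : J1 = 1 - (1 - J1) by rewrite sub1K.
rewrite eJ1; move: (1 - J1) PK1 p1 e1p q1 e1q => K1 PK1 p1 e1p q1 e1q.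
clear eJ1 HJ1 J1.
move: (pjoin A pos p (1 - q)) (join_spec hp Hq') => J1 HJ1.
have [PK2 p2 e2p q2 e2q] := join_K hp Hq' HJ1.
have eJ1 : J1 = 1 - (1 - J1) by rewrite sub1K.
rewrite eJ1; move: (1 - J1) PK2 p2 e2p q2 e2q => K2 PK2 p2 e2p q2 e2q.
clear eJ1 HJ1 J1.
move: (pjoin A pos (1 - p) q) (join_spec Hp' hq) => J1 HJ1.
have [PK3 p3 e3p q3 e3q] := join_K Hp' hq HJ1.
have eJ1 : J1 = 1 - (1 - J1) by rewrite sub1K.
rewrite eJ1; move: (1 - J1) PK3 p3 e3p q3 e3q => K3 PK3 p3 e3p q3 e3q.
clear eJ1 HJ1 J1.
move: (pjoin A pos (1 - p) (1 - q)) (join_spec Hp' Hq') => J1 HJ1.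
have [PK4 p4 e4p q4 e4q] := join_K Hp' Hq' HJ1.
have eJ1 : J1 = 1 - (1 - J1) by rewrite sub1K.
rewrite eJ1; move: (1 - J1) PK4 p4 e4p q4 e4q => K4 PK4 p4 e4p q4 e4q.
clear eJ1 HJ1 J1.
have q2' := fromCl q2; have e2q' := fromCr e2q.
have p3' := fromCl p3; have e3p' := fromCr e3p.
have p4' := fromCl p4; have e4p' := fromCr e4p.
have q4' := fromCl q4; have e4q' := fromCr e4q.
have O12 : K1 * K2 = 0 by apply: (o2 e1q q2').
have O21 : K2 * K1 = 0 by apply: (o1 e2q' q1).
have O13 : K1 * K3 = 0 by apply: (o2 e1p p3').
have O31 : K3 * K1 = 0 by apply: (o1 e3p' p1).
have O14 : K1 * K4 = 0 by apply: (o2 e1p p4').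
have O41 : K4 * K1 = 0 by apply: (o1 e4p' p1).
have O23 : K2 * K3 = 0 by apply: (o2 e2p p3').
have O32 : K3 * K2 = 0 by apply: (o1 e3p' p2).
have O24 : K2 * K4 = 0 by apply: (o2 e2p p4').
have O42 : K4 * K2 = 0 by apply: (o1 e4p' p2).
have O34 : K3 * K4 = 0 by apply: (o2 e3q q4').
have O43 : K4 * K3 = 0 by apply: (o1 e4q' q3).
set rr := 1 - K1 - K2 - K3 - K4.
have R0 : pmeet A pos (pmeet A pos (pmeet A pos (1 - K1) (1 - K2)) (1 - K3)) (1 - K4) = rr.
  rewrite (meetC PK1 PK2 O12 O21).
  have H12 := orthP PK1 PK2 O12 O21.
  rewrite (twomeet (projC H12) PK3 PK4).
  - by rewrite mulrBl mul1r mulrDl !mulrBr !mulr1 O13 O14 O23 O24 !subr0 Zp.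
  - by rewrite mulrBl mulrBr mul1r mulr1 mulrDl mulrDr O13 O23 O31 O32 addr0.
  - by rewrite mulrBl mulrBr mul1r mulr1 mulrDl mulrDr O14 O24 O41 O42 addr0.
  - by [].
  - by [].
have R1 : pmeet A pos (pmeet A pos p (1 - K3)) (1 - K4) = p * rr.
  rewrite (twomeet hp PK3 PK4) ?p3' ?e3p' ?p4' ?e4p' //.
  by rewrite /rr !mulrBr !mulr1 p1 p2 p3' p4' !subr0.
have R2 : pmeet A pos (pmeet A pos (1 - p) (1 - K1)) (1 - K2) = (1 - p) * rr.
  rewrite (twomeet Hp' PK1 PK2) ?(cKl0 p1) ?(cKr0 e1p) ?(cKl0 p2) ?(cKr0 e2p) //.
  by rewrite /rr !mulrBr !mulr1 (cKl0 p1) (cKl0 p2) p3 p4 !subr0.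
have R3 : pmeet A pos (pmeet A pos q (1 - K2)) (1 - K4) = q * rr.
  rewrite (twomeet hq PK2 PK4) ?q2' ?e2q' ?q4' ?e4q' //.
  by rewrite /rr !mulrBr !mulr1 q1 q2' q3 q4' !subr0.
have R4 : pmeet A pos (pmeet A pos (1 - q) (1 - K1)) (1 - K3) = (1 - q) * rr.
  rewrite (twomeet Hq' PK1 PK3) ?(cKl0 q1) ?(cKr0 e1q) ?(cKl0 q3) ?(cKr0 e3q) //.
  by rewrite /rr !mulrBr !mulr1 (cKl0 q1) q2 (cKl0 q3) q4 !subr0.
rewrite R0 R1 R2 R3 R4.
have := core hp hq PK1 PK2 PK3 PK4 p1 e1p q1 e1q p2 e2p q2' e2q' p3' e3p' q3 e3q
  p4' e4p' q4' e4q' (erefl rr).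
cbv zeta => -[C1 C2 C3].
have Er' : rr = 1 - K2 - K1 - K4 - K3 by rewrite /rr Zq.
have := core hp Hq' PK2 PK1 PK4 PK3 p2 e2p q2 e2q p1 e1p (cKl0 q1) (cKr0 e1q)
  p4' e4p' q4 e4q p3' e3p' (cKl0 q3) (cKr0 e3q) Er'.
cbv zeta; rewrite !sub1K => -[S1 S2 S3].
split; first by split.
by rewrite C1 S1; split.
Qed.

End S.

Unset Implicit Arguments.
Set Strict Implicit.

Theorem theorem6p7 (R : realType) (V : algType R) (A pos : V -> Prop)
  (HA : synaptic A pos) (p q : V) (hp : proj A p) (hq : proj A q) :
  let meet := pmeet A pos in
  let join := pjoin A pos in
  let pp := pperp p in
  let qp := pperp q in
  let r := meet (meet (meet (join p q) (join p qp)) (join pp q)) (join pp qp) in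
  let r_p := meet (meet p (join pp q)) (join pp qp) in
  let r_pp := meet (meet pp (join p q)) (join p qp) in
  let r_q := meet (meet q (join p qp)) (join pp qp) in
  let r_qp := meet (meet qp (join p q)) (join pp q) in
  let c := psqrt pos (p * q * p + pp * qp * pp) in
  let s := psqrt pos (p * qp * p + pp * q * pp) in
  let c_r := psqrt pos (r_p * r_q * r_p + r_pp * r_qp * r_pp) in
  let s_r := psqrt pos (r_p * r_qp * r_p + r_pp * r_q * r_pp) in
  [/\ c_r = c * r, c * r = r * c, s_r = s * r & s * r = r * s] /\
  (c = c_r + sabs pos (meet p q - meet pp qp) /\
   s = s_r + sabs pos (meet p qp - meet pp q)).
Proof. exact: (main_thm HA hp hq). Qed.
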